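(* Let $N$ be a finite set with $n=|N|\ge 2$. For a vector $o\in\mathbb{R}^{\Upsilon}$ (extended by $o(b|\emptyset)=0$ for all $b\in N$) the following three conditions are equivalent: (0) $o$ is an SE objective; (a) for every $Z\subseteq N$ and distinct $a,b\in N\setminus Z$, $o(b|\{a\}\cup Z)+o(a|Z)=o(a|\{b\}\cup Z)+o(b|Z)$; (b) there exists $m\in\mathbb{R}^{\mathcal{S}}$ (extended by $m(S)=0$ for $|S|\le1$) such that $o(a|B)=m(\{a\}\cup B)-m(B)$ for all $a\in N$ and $B\subseteq N\setminus\{a\}$. In particular, the linear subspace of SE objectives has dimension $2^n-n-1$.
   Context: $\mathrm{DAG}(N)$ is the set of acyclic directed graphs over $N$; $\mathrm{pa}_G(a)$ is the parent set of $a$ in $G$; $G\sim H$ (Markov equivalence) means $G,H$ have the same adjacencies and the same immoralities (induced subgraphs $a\to c\leftarrow b$ with $a,b$ non-adjacent). $\Upsilon=\{(a|B): a\in N,\ \emptyset\neq B\subseteq N\setminus\{a\}\}$; $\eta_G\in\mathbb{R}^{\Upsilon}$ has $\eta_G(a|B)=1$ if $B=\mathrm{pa}_G(a)$, else $0$. $o\in\mathbb{R}^{\Upsilon}$ is an SE objective if $\langle o,\eta_G\rangle=\langle o,\eta_H\rangle$ for all $G,H\in\mathrm{DAG}(N)$ with $G\sim H$. $\mathcal{S}=\{S\subseteq N:|S|\ge 2\}$. *)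

(* Defs.v *)
From mathcomp Require Import all_boot all_order all_algebra.
Set Implicit Arguments. Unset Strict Implicit. Unset Printing Implicit Defensive.
Import Order.TTheory GRing.Theory Num.Theory.
Local Open Scope ring_scope.

Section Defs.
Variable T : finType.

Definition Upsilon : predArgType :=
  {p : T * {set T} | (p.1 \notin p.2) && (p.2 != set0)}.

(* A directed graph over N, given by its parent sets. *)
Definition digraph := T -> {set T}.

Definition edge (G : digraph) : rel T := fun u v => u \in G v.

Definition is_DAG (G : digraph) : Prop :=
  forall u v, edge G u v -> ~~ connect (edge G) v u.

Definition adjacent (G : digraph) (x y : T) : bool :=
  (x \in G y) || (y \in G x).

Definition immorality (G : digraph) (a b c : T) : bool :=
  [&& a \in G c, b \in G c, a != b & ~~ adjacent G a b].

Definition markov_equiv (G H : digraph) : Prop :=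
  (forall x y, adjacent G x y = adjacent H x y) /\
  (forall a b c, immorality G a b c = immorality H a b c).

Variable R : realFieldType.

Definition objective := {ffun Upsilon -> R^o}.

Definition eta (G : digraph) : objective :=
  [ffun u : Upsilon => if (val u).2 == G (val u).1 then 1 else 0].

Definition inner (o v : objective) : R := \sum_(u : Upsilon) o u * v u.

Definition SE_objective (o : objective) : Prop :=
  forall G H, is_DAG G -> is_DAG H -> markov_equiv G H ->
    inner o (eta G) = inner o (eta H).

(* o(a|B), extended by o(a|emptyset) = 0 (value 0 also when a \in B, unused) *)
Definition oext (o : objective) (a : T) (B : {set T}) : R :=
  if @insub _ (fun p : T * {set T} => (p.1 \notin p.2) && (p.2 != set0))
       Upsilon (a, B) is Some u then o u else 0.

Definition cond_a (o : objective) : Prop :=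
  forall (Z : {set T}) (a b : T), a \notin Z -> b \notin Z -> a != b ->
    oext o b (a |: Z) + oext o a Z = oext o a (b |: Z) + oext o b Z.

Definition cond_b (o : objective) : Prop :=
  exists m : {set T} -> R,
    (forall S : {set T}, (#|S| <= 1)%N -> m S = 0) /\
    (forall (a : T) (B : {set T}), a \notin B -> oext o a B = m (a |: B) - m B).

End Defs.

(* Main.v *)
From HB Require Import structures.
Require Import Defs.
From mathcomp Require Import all_boot all_order all_algebra.
From mathcomp Require Import ring zify.
Import GRing.Theory Num.Theory.
Local Open Scope ring_scope.

Section Aux.
Variables (T : finType) (R : realFieldType).
Implicit Types (o : objective T R) (G H : digraph T) (S B Z : {set T}).

Lemma oext0 o x : oext o x set0 = 0.
Proof. by rewrite /oext insubF //= eqxx andbF. Qed.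

Lemma DAG_noloop G x : is_DAG G -> x \notin G x.
Proof.
move=> hG; apply/negP=> hx; have := hG x x hx.
by rewrite connect0.
Qed.

Lemma inner_eta o G : (forall x, x \notin G x) ->
  inner o (eta R G) = \sum_x oext o x (G x).
Proof.
move=> nl; rewrite /inner (partition_big (fun u : Upsilon T => (val u).1) predT) //=.
apply: eq_bigr => x _; rewrite /oext; case: insubP => [u0 Pu0 hv|nP].
  rewrite (bigD1 u0) /=; last by rewrite hv.
  rewrite ffunE hv /= eqxx mulr1 big1 ?addr0 // => u /andP[/eqP ux nu].
  rewrite ffunE ux; case: eqP => [e|]; last by rewrite mulr0.
  case/eqP: nu; apply: val_inj; rewrite hv.
  by move: ux e; case: u => [[y B] Pu] /= -> ->.
apply: big1 => u /eqP ux; rewrite ffunE ux.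
have /eqP Gx : G x == set0 by move: nP; rewrite /= nl /= negbK.
rewrite Gx.
case: u ux => [[y B] Pu] /= _; have /andP[_ hB] := Pu.
by rewrite (negbTE hB) mulr0.
Qed.

Lemma rank_DAG G (r : T -> nat) : (forall u v, u \in G v -> (r u < r v)%N) -> is_DAG G.
Proof.
move=> hr u v /hr ltuv; apply/negP => /connectP [p pth lst].
suff: (r v <= r (last v p))%N by rewrite -lst leqNgt ltuv.
elim: p v pth {lst ltuv} => //= y p IH v /andP[evy pth].
exact: leq_trans (ltnW (hr _ _ evy)) (IH _ pth).
Qed.

End Aux.

Set Implicit Arguments. Unset Strict Implicit.

Section Aux2.
Variables (T : finType) (R : realFieldType).
Implicit Types (o : objective T R) (G H : digraph T) (S B Z : {set T}).

Definition Gab (a b : T) Z : digraph T :=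
  fun x => if x == a then Z else if x == b then a |: Z else set0.

Lemma Gab_DAG a b Z : a \notin Z -> b \notin Z -> a != b -> is_DAG (Gab a b Z).
Proof.
move=> aZ bZ ab.
apply: (@rank_DAG _ _ (fun x => if x == a then 1%N else if x == b then 2%N else 0%N)).
move=> u v; rewrite /Gab.
have nZ : forall w, w \in Z -> (w != a) && (w != b).
  by move=> w wZ; apply/andP; split; apply/eqP => e; [move: aZ|move: bZ]; rewrite -e wZ.
case: ifP => [_ /nZ /andP[/negbTE -> /negbTE ->] //|va].
case: ifP => [_|]; last by rewrite inE.
move=> /setU1P [->|/nZ /andP[/negbTE -> /negbTE ->] //].
by rewrite eqxx.
Qed.

Lemma memGab a b Z u v : a != b ->
  (u \in Gab a b Z v) = ((v == a) && (u \in Z)) || ((v == b) && ((u == a) || (u \in Z))).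
Proof.
move=> ab; rewrite /Gab; case: (eqVneq v a) => [->|va] /=.
  by rewrite (negbTE ab) /= orbF.
by case: (v == b); rewrite ?inE.
Qed.

Ltac sp x a := case: (eqVneq x a) => [?|?]; [subst x|].
Ltac simpneq := repeat match goal with
 | H : is_true (?x != ?y) |- context [?x == ?y] => rewrite (negbTE H)
 | H : is_true (?x != ?y) |- context [?y == ?x] => rewrite [y == x]eq_sym (negbTE H)
 | H : is_true (?x \notin ?Z) |- context [?x \in ?Z] => rewrite (negbTE H)
 end.

Lemma Gab_equiv a b Z : a \notin Z -> b \notin Z -> a != b ->
  markov_equiv (Gab a b Z) (Gab b a Z).
Proof.
move=> aZ bZ ab.
have ba : b != a by rewrite eq_sym.
have hadj : forall x y, adjacent (Gab a b Z) x y = adjacent (Gab b a Z) x y.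
  move=> x y; rewrite /adjacent !memGab //.
  sp x a; try sp x b; sp y a; try sp y b; rewrite ?eqxx /=; simpneq;
    rewrite /= ?andbF ?andbT ?orbF ?orbT //=;
    try case: (x \in Z); try case: (y \in Z); rewrite ?orbT ?orbF //.
split => // x y c; rewrite /immorality hadj /adjacent !memGab //.
sp x a; try sp x b; sp y a; try sp y b; sp c a; try sp c b; rewrite ?eqxx /=; simpneq;
    rewrite /= ?andbF ?andbT ?orbF ?orbT //=;
    try case: (x \in Z); try case: (y \in Z); rewrite ?orbT ?orbF //.
Qed.

Lemma sum_Gab o a b Z : a \notin Z -> b \notin Z -> a != b ->
  \sum_x oext o x (Gab a b Z x) = oext o a Z + oext o b (a |: Z).
Proof.
move=> aZ bZ ab; have ba : b != a by rewrite eq_sym.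
rewrite (bigD1 a) // (bigD1 b) /=; last by rewrite ba.
rewrite /Gab eqxx (negbTE ba) eqxx big1 ?addr0 ?addrA // => x /andP[xb xa].
by rewrite (negbTE xa) (negbTE xb) oext0.
Qed.

Lemma SE_cond_a o : SE_objective o -> cond_a o.
Proof.
move=> hSE Z a b aZ bZ ab; have ba : b != a by rewrite eq_sym.
have := hSE _ _ (Gab_DAG aZ bZ ab) (Gab_DAG bZ aZ ba) (Gab_equiv aZ bZ ab).
rewrite !inner_eta ?sum_Gab // => [e|x|x]; last 2 first.
- exact: DAG_noloop (Gab_DAG bZ aZ ba).
- exact: DAG_noloop (Gab_DAG aZ bZ ab).
by rewrite addrC e addrC.
Qed.
End Aux2.

Section Aux3.
Variables (T : finType) (R : realFieldType).
Implicit Types (o : objective T R) (G H : digraph T) (S B Z : {set T}).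

Definition rk (x : T) : nat := enum_rank x.
Definition mfun o S : R := \sum_(x in S) oext o x [set y in S | (rk y < rk x)%N].

Lemma m_max o S x : x \in S -> (forall y, y \in S -> y != x -> (rk y < rk x)%N) ->
  mfun o S = mfun o (S :\ x) + oext o x (S :\ x).
Proof.
move=> xS hx; rewrite /mfun (bigD1 x) //= addrC.
have -> : [set y in S | (rk y < rk x)%N] = S :\ x.
  apply/setP => y; rewrite !inE; case: (eqVneq y x) => [->|yx] /=.
    by rewrite ltnn andbF.
  by case yS: (y \in S) => //=; rewrite hx.
congr (_ + _); apply: eq_big => [y|y /andP[yS yx]]; first by rewrite !inE andbC.
congr (oext _ _ _); apply/setP => z; rewrite !inE.
case: (eqVneq z x) => [->|//]; rewrite /= xS.
by apply/negbTE; rewrite -leqNgt ltnW // hx.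
Qed.

Lemma max_exists S a : a \in S ->
  exists2 x, x \in S & forall y, y \in S -> y != x -> (rk y < rk x)%N.
Proof.
move=> aS; case: (arg_maxnP rk aS) => x xS hx; exists x => // y yS yx.
have le : (rk y <= rk x)%N by exact: hx.
rewrite ltn_neqAle le andbT; apply: contra yx => /eqP e.
by apply/eqP; apply: enum_rank_inj; apply: val_inj.
Qed.

Lemma mfun0 o : mfun o set0 = 0.
Proof. by rewrite /mfun big_set0. Qed.

Lemma mfun1 o x : mfun o [set x] = 0.
Proof.
rewrite (@m_max o _ x) ?set11 // => [|y /set1P -> ]; last by rewrite eqxx.
by rewrite setDv mfun0 oext0 addr0.
Qed.

Lemma cond_a_b o : cond_a o -> cond_b o.
Proof.
move=> ha; exists (mfun o); split.
  move=> S; rewrite leq_eqVlt ltnS leqn0 => /orP[/cards1P [x ->]|].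
    exact: mfun1.
  by rewrite cards_eq0 => /eqP ->; exact: mfun0.
have main : forall k a B, (#|B| < k)%N -> a \notin B ->
    oext o a B = mfun o (a |: B) - mfun o B.
  elim=> [//|k IH] a B; rewrite ltnS => hk aB.
  case: (set_0Vmem B) => [->|[b bB]].
    by rewrite oext0 setU0 mfun1 mfun0 subr0.
  have [x xaB hx] := max_exists (setU1r a bB).
  case: (eqVneq x a) => [ex|xa].
    subst x; rewrite (m_max o xaB hx) setU1K //; ring.
  have xB : x \in B by case/setU1P: xaB => // e; case/eqP: xa.
  set B' := B :\ x.
  have eaB : (a |: B) :\ x = a |: B'.
    by apply/setP => z; rewrite !inE; case: (eqVneq z x) => // ->; rewrite (negbTE xa).
  rewrite (m_max o xaB hx) eaB (@m_max o B x) //; last first.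
    by move=> y yB; apply: hx; rewrite inE yB orbT.
  have aB' : a \notin B' by rewrite inE negb_and aB orbT.
  have xB' : x \notin B' by rewrite /B' setD11.
  have hB' : (#|B'| < k)%N.
    by apply: leq_trans hk; rewrite /B' (cardsD1 x B) xB.
  have := ha B' a x aB' xB' (negbT (introF eqP (fun e => (elimN eqP xa) (esym e)))).
  rewrite (IH _ _ hB' aB') setD1K //.
  move=> e; rewrite -[oext o a B](addrK (oext o x B')) -e; rewrite /B'.
  ring.
move=> a B aB; exact: (main #|B|.+1).
Qed.

Lemma cond_b_a o : cond_b o -> cond_a o.
Proof.
case=> m [_ hm] Z a b aZ bZ ab.
have baZ : b \notin a |: Z by rewrite !inE negb_or eq_sym ab.
have abZ : a \notin b |: Z by rewrite !inE negb_or ab.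
rewrite !hm // setUCA; ring.
Qed.

End Aux3.

Section Aux4.
Variables (T : finType) (R : realFieldType).
Implicit Types (o : objective T R) (G H : digraph T) (S B Z P Q : {set T}).

Definition cnt G S := #|[set x | (x \in S) && (S :\ x \subset G x)]|.

Lemma cnt_le1 G S : is_DAG G -> (cnt G S <= 1)%N.
Proof.
move=> hG; apply/card_le1_eqP => x y; rewrite !inE => /andP[xS hx] /andP[yS hy].
case: (eqVneq x y) => // xy.
have yGx : y \in G x by apply: (subsetP hx); rewrite in_setD1 eq_sym xy yS.
have xGy : x \in G y by apply: (subsetP hy); rewrite in_setD1 xy xS.
have := hG y x yGx; by rewrite (connect1 (xGy : edge G x y)).
Qed.

Lemma sink_exists G S a : is_DAG G -> a \in S ->
  exists2 s, s \in S & forall z, z \in S -> s \notin G z.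
Proof.
move=> hG aS.
pose anc w := #|[set y | connect (edge G) y w]|.
case: (arg_maxnP anc aS) => s sS hs; exists s => // z zS; apply/negP => szG.
have : (anc s < anc z)%N.
  apply: proper_card; apply/properP; split.
    apply/subsetP => y; rewrite !inE => ys.
    exact: connect_trans ys (connect1 (szG : edge G s z)).
  exists z; first by rewrite inE connect0.
  by rewrite inE; apply: hG.
have : (anc z <= anc s)%N by exact: hs.
by move=> h1 h2; have := leq_trans h2 h1; rewrite ltnn.
Qed.

Lemma transfer G H S x : is_DAG G -> is_DAG H -> markov_equiv G H ->
  x \in S -> S :\ x \subset G x -> exists2 s, s \in S & S :\ s \subset H s.
Proof.
move=> hG hH [hadj himm] xS hx.
case: (sink_exists hH xS) => s sS hs; exists s => //.
apply/subsetP => z; rewrite in_setD1 => /andP[zs zS].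
suff : adjacent H z s by rewrite /adjacent (negbTE (hs z zS)) orbF.
rewrite -hadj.
case: (eqVneq z x) => [ezx|zx].
  subst z; apply/orP; right; apply: (subsetP hx); by rewrite in_setD1 eq_sym zs.
case: (eqVneq s x) => [esx|sx].
  subst s; apply/orP; left; apply: (subsetP hx); by rewrite in_setD1 zx.
have zG : z \in G x by apply: (subsetP hx); rewrite in_setD1 zx.
have sG : s \in G x by apply: (subsetP hx); rewrite in_setD1 sx.
case adj: (adjacent G z s) => //.
have : immorality G z s x by rewrite /immorality zG sG zs adj.
rewrite himm => /and4P[_ sHx _ _].
by have := hs x xS; rewrite sHx.
Qed.

Lemma cnt_eq G H S : is_DAG G -> is_DAG H -> markov_equiv G H -> cnt G S = cnt H S.
Proof.
move=> hG hH heq.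
have heq' : markov_equiv H G.
  by case: heq => h1 h2; split => *; [rewrite h1|rewrite h2].
have ex : forall G' H', is_DAG G' -> is_DAG H' -> markov_equiv G' H' ->
    (0 < cnt G' S)%N -> (0 < cnt H' S)%N.
  move=> G' H' hG' hH' he; rewrite /cnt !card_gt0 => /set0Pn [x]; rewrite inE => /andP[xS hx].
  case: (transfer hG' hH' he xS hx) => s sS hs.
  by apply/set0Pn; exists s; rewrite inE sS.
have := cnt_le1 S hG; have := cnt_le1 S hH.
have := ex _ _ hG hH heq; have := ex _ _ hH hG heq'.
by case: (cnt G S) => [|[|?]]; case: (cnt H S) => [|[|?]] //= h1 h2 h3 h4;
  first [by move: (h1 isT) | by move: (h2 isT) | by move: h3 | by move: h4].
Qed.

End Aux4.

Section Aux5.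
Variables (T : finType) (R : realFieldType).
Implicit Types (S P Q : {set T}).

Lemma alt_sum Q S : \sum_(P : {set T} | (Q \subset P) && (P \subset S))
   (-1) ^+ #|P :\: Q| = (Q == S)%:R :> R.
Proof.
pose F i : R := if i \in S then (if i \in Q then 1 else -1) else 0.
pose Gf i : R := if i \in Q then 0 else 1.
have c1 : forall P, \prod_i (if i \in P then F i else Gf i) =
    if (Q \subset P) && (P \subset S) then (-1) ^+ #|P :\: Q| else 0.
  move=> P; case: ifP => [/andP[QP PS] | nc].
    rewrite -prodr_const [RHS]big_mkcond /=; apply: eq_bigr => i _.
    rewrite /F /Gf !inE.
    move: (subsetP QP i) (subsetP PS i).
    case: (i \in P); case: (i \in Q); case: (i \in S) => //= h1 h2;
      first [by move: (h1 isT) | by move: (h2 isT) | done].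
  move/negbT: nc; rewrite negb_and => /orP[/subsetPn [i iQ iP]|/subsetPn [i iP iS]].
    by rewrite (bigD1 i) //= (negbTE iP) /Gf iQ mul0r.
  by rewrite (bigD1 i) //= iP /F (negbTE iS) mul0r.
rewrite big_mkcond /=.
under eq_bigr => P _ do rewrite -c1.
rewrite -(bigA_distr _ _ F Gf).
case: (eqVneq Q S) => [e|neq].
  subst Q; by rewrite big1 // => i _ /=; rewrite /F /Gf; case: (i \in S); rewrite ?addr0 ?add0r.
case: (pickP (fun i => (i \in Q) != (i \in S))) => [i hi|hn]; last first.
  by case/eqP: neq; apply/setP => i; apply/eqP; apply: negbFE; exact: hn.
rewrite (bigD1 i) //= /F /Gf.
by move: hi; case: (i \in Q); case: (i \in S) => //= _; rewrite ?addNr ?addr0 mul0r.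
Qed.

Definition mu (m : {set T} -> R) S :=
  \sum_(Q : {set T} | Q \subset S) (-1) ^+ #|S :\: Q| * m Q.

Lemma moebius (m : {set T} -> R) S0 :
  m S0 = \sum_S mu m S * (S \subset S0)%:R.
Proof.
rewrite /mu.
under eq_bigr => S _ do rewrite big_distrl /= big_mkcond /=.
have key : forall Q, \sum_(P : {set T}) (if Q \subset P then
      (-1) ^+ #|P :\: Q| * m Q * (P \subset S0)%:R else 0) = m Q * (Q == S0)%:R.
  move=> Q; transitivity (\sum_(P : {set T} | (Q \subset P) && (P \subset S0))
      (-1) ^+ #|P :\: Q| * m Q).
    rewrite [RHS]big_mkcond /=; apply: eq_bigr => P _.
    by case: (Q \subset P); case: (P \subset S0); rewrite /= ?mulr1 ?mulr0.
  by rewrite -big_distrl /= alt_sum mulrC.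
rewrite exchange_big /=; under eq_bigr => Q _ do rewrite key.
rewrite (bigD1 S0) //= eqxx mulr1 big1 ?addr0 // => Q /negbTE ->.
by rewrite mulr0.
Qed.

End Aux5.

Section Aux6.
Variables (T : finType) (R : realFieldType).
Implicit Types (o : objective T R) (G H : digraph T) (S B Z P Q : {set T}).

Lemma term_diff (x : T) S P : x \notin P ->
  (S \subset x |: P)%:R - (S \subset P)%:R =
  ((x \in S) && (S :\ x \subset P))%:R :> R.
Proof.
move=> xP.
have e1 : (S \subset x |: P) = (S :\ x \subset P) by rewrite subDset.
have e2 : (S \subset P) = (x \notin S) && (S :\ x \subset P).
  case xS: (x \in S) => /=.
    by apply/negbTE/negP => /subsetP /(_ x xS); rewrite (negbTE xP).
  suff -> : S :\ x = S by [].
  apply/setP => y; rewrite !inE.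
  by case: (eqVneq y x) => [->|]; rewrite ?xS.
rewrite e1 e2; case: (x \in S); case: (S :\ x \subset P); rewrite /= ?subrr ?subr0 //.
Qed.

Lemma phi_cnt (m : {set T} -> R) G : is_DAG G ->
  \sum_x (m (x |: G x) - m (G x)) = \sum_S mu m S * (cnt G S)%:R.
Proof.
move=> hG.
under eq_bigr => x _ do rewrite (moebius m (x |: G x)) (moebius m (G x)) -sumrB.
under eq_bigr => x _ do under eq_bigr => S _ do
  rewrite -mulrBr (term_diff _ (@DAG_noloop _ _ x hG)).
rewrite exchange_big /=; apply: eq_bigr => S _.
rewrite -big_distrr /=; congr (_ * _).
rewrite /cnt -sum1_card natr_sum [RHS]big_mkcond /=.
by apply: eq_bigr => x _; rewrite inE; case: (_ && _).
Qed.

Lemma cond_b_SE o : cond_b o -> SE_objective o.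
Proof.
case=> m [_ hm] G H hG hH heq.
rewrite !inner_eta; try by move=> x; apply: DAG_noloop.
have h : forall G', is_DAG G' -> \sum_x oext o x (G' x) = \sum_S mu m S * (cnt G' S)%:R.
  move=> G' hG'; rewrite -phi_cnt //; apply: eq_bigr => x _.
  by rewrite hm // DAG_noloop.
rewrite !h //; apply: eq_bigr => S _; by rewrite (cnt_eq S hG hH heq).
Qed.

End Aux6.

Section Aux7.
Variables (T : finType) (R : realFieldType).

Definition Sbig := {S : {set T} | (1 < #|S|)%N}.
Definition Dom := {ffun Sbig -> R^o}.
Definition mmf (mu : Dom) (S : {set T}) : R :=
  if @insub _ (fun S : {set T} => (1 < #|S|)%N) Sbig S is Some s then mu s else 0.
Definition Lf (mu : Dom) : objective T R :=
  [ffun u : Upsilon T => mmf mu ((val u).1 |: (val u).2) - mmf mu (val u).2].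

Lemma mmf_lin a mu nu S : mmf (a *: mu + nu) S = a * mmf mu S + mmf nu S.
Proof. by rewrite /mmf; case: insubP => [s _ _|_]; rewrite ?ffunE ?mulr0 ?addr0. Qed.

Lemma Lf_lin : linear Lf.
Proof.
move=> a mu nu; apply/ffunP => u; rewrite !ffunE !mmf_lin.
rewrite /GRing.scale /=. ring.
Qed.

Lemma card_Sbig : #|{: Sbig}| = (2 ^ #|T| - #|T| - 1)%N.
Proof.
rewrite card_sig.
have -> : #|[pred S : {set T} | (1 < #|S|)%N]| = #|~: (set0 |: [set [set x] | x : T])|.
  apply: eq_card => S; rewrite !inE /= negb_or.
  apply/idP/andP => [h|[h1 /imsetP h2]].
    split; first by apply: contraTneq h => ->; rewrite cards0.
    by apply/imsetP => -[x _ e]; move: h; rewrite e cards1.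
  rewrite ltnNge leq_eqVlt ltnS leqn0 cards_eq0 (negbTE h1) orbF.
  by apply/cards1P => -[x e]; apply: h2; exists x.
have := cardsC (set0 |: [set [set x] | x : T]).
have hT : #|{set T}| = (2 ^ #|T|)%N.
  by have := card_powerset [set: T]; rewrite powersetT !cardsT.
have n0 : (set0 : {set T}) \notin [set [set x] | x : T].
  apply/imsetP => -[x _ e]; have := set11 x; by rewrite -e inE.
rewrite hT cardsU1 n0 card_imset; last exact: set1_inj.
move=> <- /=; lia.
Qed.


Lemma mmf_small mu (S : {set T}) : (#|S| <= 1)%N -> mmf mu S = 0.
Proof. by move=> h; rewrite /mmf insubF // ltnNge h. Qed.

Lemma mmf_val mu (s : Sbig) : mmf mu (val s) = mu s.
Proof. by rewrite /mmf valK. Qed.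

Lemma oext_sub (o : objective T R) (a : T) (B : {set T}) (Pu : (a \notin B) && (B != set0)) :
  oext o a B = o (exist _ (a, B) Pu).
Proof.
rewrite /oext; case: insubP => [u' _ hv|/negP //].
by congr (o _); apply: val_inj; rewrite hv.
Qed.

Lemma Lf_cond_b (o : objective T R) : cond_b o <-> exists mu, o = Lf mu.
Proof.
split.
  case=> m [hm1 hm]; exists [ffun s : Sbig => m (val s)].
  have mmE : forall S, mmf [ffun s : Sbig => m (val s)] S = m S.
    move=> S; rewrite /mmf; case: insubP => [s _ <-|nP]; first by rewrite ffunE.
    by rewrite hm1 // leqNgt.
  apply/ffunP => -[[a B] Pu]; rewrite ffunE /= !mmE -hm; last by case/andP: (Pu).
  by rewrite oext_sub.
case=> mu ->; exists (mmf mu); split; first exact: mmf_small.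
move=> a B aB; rewrite /oext; case: insubP => [u _ hv|nP].
  by rewrite ffunE hv.
have /eqP -> : B == set0 by move: nP; rewrite /= aB /= negbK.
by rewrite setU0 !mmf_small ?cards1 ?cards0 ?subrr.
Qed.

Lemma Lf_inj : injective Lf.
Proof.
move=> mu1 mu2 e.
have h : forall k (S : {set T}), (#|S| < k)%N -> mmf mu1 S = mmf mu2 S.
  elim=> [//|k IH] S; rewrite ltnS => hk.
  case: (leqP #|S| 1) => [h1|h1]; first by rewrite !mmf_small.
  have /set0Pn [a aS] : S != set0 by rewrite -card_gt0 (ltn_trans _ h1).
  set B := S :\ a.
  have aB : a \notin B by rewrite /B setD11.
  have hB : #|B| = #|S|.-1 by rewrite /B (cardsD1 a S) aS.
  have B0 : B != set0 by rewrite -card_gt0 hB -ltnS (ltn_predK h1).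
  have Pu : (a \notin B) && (B != set0) by rewrite aB B0.
  have := congr1 (fun f : objective T R => f (exist _ (a, B) Pu)) e.
  rewrite !ffunE /= /B setD1K // (IH (S :\ a)); last first.
    by rewrite -/B hB (leq_trans _ hk) // ltn_predL (ltn_trans _ h1).
  by move/(congr1 (fun z => z + mmf mu2 (S :\ a))); rewrite !subrK.
apply/ffunP => s; rewrite -!mmf_val; exact: h (ltnSn _).
Qed.

End Aux7.

Unset Implicit Arguments. Set Strict Implicit.

Theorem lemma5 (T : finType) (R : realFieldType) (hn : (2 <= #|T|)%N) :
  (forall o : objective T R,
     (SE_objective o <-> cond_a o) /\ (cond_a o <-> cond_b o)) /\
  (exists U : {vspace objective T R},
     (forall o : objective T R, o \in U <-> SE_objective o) /\
     \dim U = (2 ^ #|T| - #|T| - 1)%N).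
Proof.
have equiv : forall o : objective T R,
     (SE_objective o <-> cond_a o) /\ (cond_a o <-> cond_b o).
  move=> o; split; split.
  - exact: SE_cond_a.
  - by move=> ha; apply: cond_b_SE; apply: cond_a_b.
  - exact: cond_a_b.
  - exact: cond_b_a.
split => //.
pose lM := GRing.isLinear.Build _ _ _ _ (@Lf T R) (@Lf_lin T R).
pose LL : {linear Dom T R -> objective T R} := HB.pack (@Lf T R) lM.
exists (limg (linfun LL)); split.
  move=> o; have [[h1 h2] [h3 h4]] := equiv o.
  split.
    move/memv_imgP => [mu _ e]; apply: h2; apply: h4.
    by apply/Lf_cond_b; exists mu; rewrite e lfunE.
  move=> hse; apply/memv_imgP.
  have [mu e] : exists mu, o = Lf mu by apply/Lf_cond_b; apply: h3; apply: h1.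
  by exists mu; [exact: memvf | rewrite lfunE].
rewrite limg_dim_eq; last first.
  have /lker0P /eqP -> : injective (linfun LL).
    by move=> x y; rewrite !lfunE; exact: Lf_inj.
  exact: capv0.
rewrite dimvf /dim /=.
rewrite [dim _]/= muln1.
exact: card_Sbig.
Qed.
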